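(* Let $k\ge 3$ be an odd integer. Then $S_3(k;k)\ge 2(k^2-k-1)$.
   Context: Let $k,r$ be positive integers with $r\mid k$. A solution to $\mathcal{E}$ is a $k$-tuple $(x_1,\dots,x_k)$ of positive integers (not necessarily distinct) with $\sum_{i=1}^{k-1}x_i=x_k$; it lies in $[1,n]$ if all $x_i\in\{1,\dots,n\}$. Given a coloring $\chi$ of $[1,n]$ with colors in $\{0,1,\dots,r-1\}$ (viewed as integers), a solution is $r$-zero-sum if $\sum_{i=1}^k\chi(x_i)\equiv 0\pmod r$. $S_3(k;r)$ denotes the least positive integer $n$ such that every coloring $\chi:[1,n]\to\{0,1,\dots,r-1\}$ admits an $r$-zero-sum solution to $\mathcal{E}$ in $[1,n]$. *)

(* Defs.v *)
From mathcomp Require Import all_boot.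
Set Implicit Arguments. Unset Strict Implicit. Unset Printing Implicit Defensive.

Definition is_solution (k : nat) (x : 'I_k -> nat) : Prop :=
  (forall i, 0 < x i) /\
  \sum_(i < k | (i : nat) < k.-1) x i = \sum_(i < k | (i : nat) == k.-1) x i.

Definition in_interval (k n : nat) (x : 'I_k -> nat) : Prop :=
  forall i, 1 <= x i <= n.

Definition is_coloring (r n : nat) (chi : nat -> nat) : Prop :=
  forall m, 1 <= m <= n -> chi m < r.

Definition zero_sum (k r : nat) (chi : nat -> nat) (x : 'I_k -> nat) : Prop :=
  \sum_(i < k) chi (x i) = 0 %[mod r].

Definition S3_property (k r n : nat) : Prop :=
  forall chi : nat -> nat, is_coloring r n chi ->
    exists x : 'I_k -> nat,
      is_solution x /\ in_interval n x /\ zero_sum r chi x.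

(* S_3(k;r) >= b  :  every positive n with the property satisfies n >= b,
   i.e. the least such n is at least b. *)
Definition S3_ge (k r b : nat) : Prop :=
  forall n, 0 < n -> S3_property k r n -> b <= n.

(* Main.v *)
Require Import Defs.
From mathcomp Require Import all_boot.
From mathcomp Require Import zify.

Definition mycol (m x : nat) : nat :=
  if odd x then 1 else if (2*m <= x) && (x < 2*m*m) then 2 else 0.

Lemma mycol_le m x : mycol m x <= 2.
Proof. rewrite /mycol; case: (odd x) => //; case: ifP => //. Qed.

Lemma mycol_mod2 m x : mycol m x %% 2 = x %% 2.
Proof. rewrite /mycol [x %% 2]modn2; case: (odd x) => //; case: ifP => //. Qed.

Lemma mycol0 m x : mycol m x = 0 -> x %% 2 = 0 /\ (x < 2*m \/ 2*m*m <= x).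
Proof.
rewrite /mycol modn2; case: (odd x) => //; case: ifP => // h _; split => //.
move/negbT: h; rewrite negb_and -ltnNge -leqNgt => /orP [] ->; auto.
Qed.

Lemma mycol2 m x : mycol m x = 2 -> 2*m <= x < 2*m*m.
Proof. rewrite /mycol; case: (odd x) => //; case: ifP => //. Qed.

Lemma key m p (hm : m = p.*2) (hp : 0 < p) (y : 'I_m -> nat) z n
  (hy : forall i, 0 < y i) (hs : \sum_(i<m) y i = z) (hz : z <= n)
  (hn : n < 2*((m.+1)^2 - m.+1 - 1))
  (h0 : (\sum_(i<m) mycol m (y i) + mycol m z) %% m.+1 = 0) : False.
Proof.
set S := \sum_(i<m) mycol m (y i) in h0.
have e : m.+1 ^ 2 = m * m + 2 * m + 1 by rewrite expnS expn1; lia.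
rewrite e in hn.
have hS : S <= 2*m.
  rewrite /S; apply: (@leq_trans (\sum_(i<m) 2)); first by apply: leq_sum => i _; apply: mycol_le.
  rewrite sum_nat_const card_ord; lia.
have hpar : (S + mycol m z) %% 2 = 0.
  rewrite -modnDm /S -modn_summ.
  under eq_bigr => i _ do rewrite mycol_mod2.
  rewrite modn_summ mycol_mod2 modnDm.
  transitivity ((z + z) %% 2); last lia.
  by congr (_ %% 2); congr (_ + _).
have hz2 := mycol_le m z.
have hy2 : forall i, mycol m (y i) = 0 -> 2 <= y i.
  move=> i /mycol0 [h _]; have := hy i; lia.
have /dvdnP [q hq] : m.+1 %| S + mycol m z by rewrite /dvdn h0.
case: q hq => [|[|[|q]]] hq.
- have hS0 : S = 0 by lia.
  have hz0 : mycol m z = 0 by lia.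
  have hall : forall i, mycol m (y i) = 0.
    move=> i; move/eqP: hS0; rewrite /S sum_nat_eq0 => /forallP /(_ i) /eqP; by [].
  case: (boolP [exists i, 2*m*m <= y i]).
  + move=> /existsP [j hj].
    rewrite (bigD1 j) //= in hs.
    have hr : (m.-1) * 2 <= \sum_(i < m | i != j) y i.
      apply: (@leq_trans (\sum_(i<m | i != j) 2)).
        by rewrite sum_nat_const cardC1 card_ord.
      by apply: leq_sum => i _; apply: hy2.
    have hm1 : m.-1 * 2 = 2 * m - 2 by case: (m) hm => // m0 _; lia.
    move: hs hr; set R := \sum_(i < m | i != j) y i => hs hr.
    nia.
  + move=> /existsPn hsm.
    have hlo : m * 2 <= z.
      rewrite -hs; apply: (@leq_trans (\sum_(i<m) 2)).
        by rewrite sum_nat_const card_ord.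
      by apply: leq_sum => i _; apply: hy2.
    have hhi : z <= m * (2*m - 1).
      rewrite -hs; apply: (@leq_trans (\sum_(i<m) (2*m-1))); last first.
        by rewrite sum_nat_const card_ord.
      apply: leq_sum => i _; have := hsm i; have := mycol0 _ _ (hall i); lia.
    have := mycol0 _ _ hz0; nia.
- lia.
- have hSm : S = 2*m by lia.
  have hz2' : mycol m z = 2 by lia.
  have hall : forall i, mycol m (y i) = 2.
    move=> i.
    have : \sum_(i < m) (2 - mycol m (y i)) = 0.
      rewrite sumnB; last by move=> j _; apply: mycol_le.
      rewrite sum_nat_const card_ord -/S hSm; lia.
    move/eqP; rewrite sum_nat_eq0 => /forallP /(_ i) /eqP.
    have := mycol_le m (y i); lia.
  have hlo : m * (2*m) <= z.
    rewrite -hs; apply: (@leq_trans (\sum_(i<m) (2*m))).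
      by rewrite sum_nat_const card_ord.
    by apply: leq_sum => i _; have := mycol2 _ _ (hall i); lia.
  have := mycol2 _ _ hz2'; nia.
- nia.
Qed.

Theorem proposition7 (k : nat) (hk3 : 3 <= k) (hodd : odd k) :
  S3_ge k k (2 * (k ^ 2 - k - 1)).
Proof.
have [p hk] : exists p, k = p.*2.+1.
  by exists k./2; rewrite -[k in LHS]odd_double_half hodd add1n.
clear hodd; subst k.
have hp : 0 < p by move: hk3; case: p.
move=> n n0 Hp; rewrite leqNgt; apply/negP => hn.
have col : is_coloring p.*2.+1 n (mycol p.*2).
  move=> m _; have := mycol_le p.*2 m; lia.
have [x [[hpos hsol] [hint hzs]]] := Hp _ col.
have h1 : \sum_(i < p.*2.+1 | (i : nat) < p.*2) x i =
    \sum_(i < p.*2) x (widen_ord (leqnSn _) i).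
  rewrite big_mkcond big_ord_recr /= ltnn addn0.
  by apply: eq_bigr => i _; rewrite (ltn_ord i).
have h2 : \sum_(i < p.*2.+1 | (i : nat) == p.*2) x i = x ord_max.
  rewrite big_mkcond big_ord_recr /= eqxx big1 ?add0n // => i _.
  by rewrite (ltn_eqF (ltn_ord i)).
rewrite /= h1 h2 in hsol.
rewrite /zero_sum big_ord_recr /= mod0n in hzs.
apply: (@key p.*2 p erefl hp (fun i => x (widen_ord (leqnSn _) i)) (x ord_max) n).
- by move=> i.
- exact: hsol.
- by have /andP [] := hint ord_max.
- by [].
- by [].
Qed.
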